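(* Let $R$ be a finite commutative Frobenius ring of characteristic $2$, let $G=\langle x\rangle$ be a finite cyclic group of order $n$ with elements listed as $g_i=x^{i-1}$ ($i=1,\dots,n$), let $v_1\neq v_2$ be elements of $RG$, and let $A$ be an $n\times n$ reverse circulant matrix over $R$. Let $C_\sigma$ be the code over $R$ generated by $$M(\sigma)=\left(\, I_{2n} \;\middle|\; \begin{matrix} \sigma(v_1) & \sigma(v_2)+A\\ \sigma(v_2)+A & \sigma(v_1)\end{matrix}\,\right).$$ Then $C_\sigma$ is a self-dual code of length $4n$ if and only if $\sigma((v_1+v_2)(v_1+v_2)^* )+A^2=I_n$ and $v_1v_2^*=v_2v_1^*$.
   Context: For $v=\sum_{g\in G}\alpha_g g\in RG$, $\sigma(v)$ is the $n\times n$ matrix over $R$ whose $(i,j)$ entry is $\alpha_{g_i^{-1}g_j}$ (so for $v=\sum_{i=0}^{n-1}\alpha_i x^i$, $\sigma(v)$ is the circulant matrix with first row $(\alpha_0,\dots,\alpha_{n-1})$). The canonical involution is $v^*=\sum_g\alpha_g g^{-1}$. An $n\times n$ matrix $(a_{ij})$ is reverse circulant if $a_{ij}$ depends only on $(i+j)\bmod n$. The code generated by a matrix is the $R$-submodule spanned by its rows; it is self-dual if it equals its dual with respect to the Euclidean inner product $\langle x,y\rangle=\sum_i x_iy_i$. *)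

(* Defs.v *)
From HB Require Import structures.
From mathcomp Require Import all_boot all_order all_algebra.
Set Implicit Arguments. Unset Strict Implicit. Unset Printing Implicit Defensive.
Import GRing.Theory.
Local Open Scope ring_scope.

Section Ideals.
Variable R : finComNzRingType.

Definition is_ideal (I : {set R}) : Prop :=
  [/\ (0 : R) \in I,
      (forall x y, x \in I -> y \in I -> x + y \in I) &
      (forall r x, x \in I -> r * x \in I)].

Definition minimal_ideal (I : {set R}) : Prop :=
  [/\ is_ideal I, I != [set 0] &
      forall J, is_ideal J -> J \subset I -> J = [set 0] \/ J = I].

Definition maximal_ideal (I : {set R}) : Prop :=
  [/\ is_ideal I, I != [set: R] &
      forall J, is_ideal J -> I \subset J -> J = I \/ J = [set: R]].

Definition in_jacobson (x : R) : Prop :=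
  forall I, maximal_ideal I -> x \in I.

Definition in_socle (x : R) : Prop :=
  forall I, is_ideal I -> (forall J, minimal_ideal J -> J \subset I) -> x \in I.

(* R is Frobenius iff soc(R) is isomorphic to R/J(R) as R-modules; an
   isomorphism R/J(R) -> soc(R) is the same as a generator s of soc(R)
   whose annihilator is exactly J(R). *)
Definition frobenius_ring : Prop :=
  exists s : R, (forall x, in_socle x <-> exists r, x = r * s) /\
                (forall r, r * s = 0 <-> in_jacobson r).
End Ideals.

(* ---------- group ring R[C_n] of a cyclic group of order n = m.+1 ----------
   An element v = sum_i alpha_i x^i is represented by its coefficient
   function 'I_m.+1 -> R; indices are taken in Z/(m+1) (Zp structure). *)
Definition RG (R : finComNzRingType) (m : nat) := {ffun 'I_m.+1 -> R}.

Definition rg_mul (R : finComNzRingType) m (u v : RG R m) : RG R m :=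
  [ffun k : 'I_m.+1 => \sum_(i : 'I_m.+1) u i * v (k - i)%R].

Definition rg_add (R : finComNzRingType) m (u v : RG R m) : RG R m :=
  [ffun k => u k + v k].

Definition rg_star (R : finComNzRingType) m (v : RG R m) : RG R m :=
  [ffun k : 'I_m.+1 => v (- k)%R].

(* sigma(v)_{ij} = alpha_{g_i^{-1} g_j} = alpha_{j - i}, g_i = x^(i-1) *)
Definition sigma (R : finComNzRingType) m (v : RG R m) : 'M[R]_m.+1 :=
  \matrix_(i, j) v (j - i)%R.

Definition reverse_circulant (R : finComNzRingType) m (A : 'M[R]_m.+1) : Prop :=
  forall i j i' j' : 'I_m.+1, (i + j = i' + j')%R -> A i j = A i' j'.

Definition in_code (R : finComNzRingType) k N (G : 'M[R]_(k, N)) (x : 'rV[R]_N) : Prop :=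
  exists c : 'rV[R]_k, x = c *m G.

Definition euclid (R : finComNzRingType) N (x y : 'rV[R]_N) : R :=
  \sum_(i < N) x 0 i * y 0 i.

Definition in_dual_code (R : finComNzRingType) k N (G : 'M[R]_(k, N)) (y : 'rV[R]_N) : Prop :=
  forall x, in_code G x -> euclid x y = 0.

Definition self_dual_code (R : finComNzRingType) k N (G : 'M[R]_(k, N)) : Prop :=
  forall y, in_code G y <-> in_dual_code G y.

Definition Msigma (R : finComNzRingType) m (v1 v2 : RG R m) (A : 'M[R]_m.+1)
  : 'M[R]_(m.+1 + m.+1, (m.+1 + m.+1) + (m.+1 + m.+1)) :=
  row_mx 1%:M (block_mx (sigma v1) (sigma v2 + A) (sigma v2 + A) (sigma v1)).

(* Main.v *)
Require Import Defs.
From HB Require Import structures.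
From mathcomp Require Import all_boot all_order all_algebra.
Set Implicit Arguments. Unset Strict Implicit. Unset Printing Implicit Defensive.
Import GRing.Theory.
Local Open Scope ring_scope.

Lemma euclidE (R : finComNzRingType) N (x y : 'rV[R]_N) : euclid x y = (x *m y^T) 0 0.
Proof. by rewrite /euclid mxE; apply eq_bigr => i _; rewrite mxE. Qed.

Lemma sd_iff (R : finComNzRingType) N (B : 'M[R]_N) :
  self_dual_code (row_mx 1%:M B) <-> B *m B^T = - 1%:M.
Proof.
set G := row_mx 1%:M B.
have GGT : G *m G^T = 1%:M + B *m B^T.
  by rewrite /G tr_row_mx mul_row_col trmx1 mul1mx ?mulmx1.
split.
- move=> sd; have : G *m G^T = 0.
    apply/matrixP => i j; rewrite !mxE.
    have cj : in_code G (row j G) by exists (delta_mx 0 j); rewrite rowE.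
    have ci : in_code G (row i G) by exists (delta_mx 0 i); rewrite rowE.
    have h := (sd _).1 cj _ ci; rewrite /euclid in h; rewrite -[RHS]h.
    by apply eq_bigr => k _; rewrite !mxE.
  rewrite GGT => /eqP; rewrite addr_eq0 => /eqP h.
  by rewrite h opprK.
- move=> hB y; split.
  + case=> c -> x [d ->].
    rewrite euclidE trmx_mul !mulmxA -(mulmxA d) GGT hB addrN mulmx0 mul0mx mxE.
    by [].
  + move=> hy.
    have Gy : G *m y^T = 0.
      apply/matrixP => i j; rewrite (ord1 j) [RHS]mxE.
      have := hy (row i G) (ex_intro _ (delta_mx 0 i) (rowE _ _)).
      by rewrite euclidE -row_mul mxE.
    rewrite -[y]hsubmxK in Gy *.
    move: Gy; rewrite /G tr_row_mx mul_row_col mul1mx => /eqP; rewrite addr_eq0 => /eqP e1.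
    have e2 : lsubmx y = - (rsubmx y *m B^T).
      by rewrite -[lsubmx y]trmxK e1 linearN /= trmx_mul trmxK.
    have BTB : B^T *m B = - 1%:M.
      have h : B *m (- B^T) = 1%:M by rewrite mulmxN hB opprK.
      have := mulmx1C h; rewrite mulNmx => /eqP; rewrite eqr_oppLR => /eqP //.
    exists (lsubmx y); rewrite /G mul_mx_row mulmx1; congr row_mx.
    by rewrite e2 mulNmx -mulmxA BTB mulmxN mulmx1 opprK.
Qed.

Section Sig.
Variables (R : finComNzRingType) (m : nat).
Implicit Types (u v : RG R m).

Lemma sigma_add u v : sigma (rg_add u v) = sigma u + sigma v.
Proof. by apply/matrixP => i j; rewrite !mxE ffunE. Qed.

Lemma sigma_star v : sigma (rg_star v) = (sigma v)^T.
Proof. by apply/matrixP => i j; rewrite !mxE ffunE opprB. Qed.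

Lemma sigma_mul u v : sigma (rg_mul u v) = sigma u *m sigma v.
Proof.
apply/matrixP => i j; rewrite !mxE ffunE.
rewrite [RHS](reindex_inj (addIr i)) /=.
apply eq_bigr => k _; rewrite !mxE addrK; congr (_ * v _).
by rewrite opprD addrA addrAC.
Qed.

Lemma sigma_inj u v : sigma u = sigma v -> u = v.
Proof.
move=> /matrixP h; apply/ffunP => k; have := h 0 k; rewrite !mxE subr0 //.
Qed.

Lemma sigma_rc v (A : 'M[R]_m.+1) : reverse_circulant A ->
  sigma v *m A = A *m (sigma v)^T.
Proof.
move=> hA; apply/matrixP => i j; rewrite !mxE.
rewrite [RHS](reindex_inj (addIr (j - i))) /=.
apply eq_bigr => k _; rewrite !mxE mulrC; congr (_ * _).
  by apply: hA; rewrite addrCA [i + _]addrC subrK.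
by rewrite addrA addrAC addrK.
Qed.

Lemma rc_sym (A : 'M[R]_m.+1) : reverse_circulant A -> A^T = A.
Proof. by move=> hA; apply/matrixP => i j; rewrite mxE; apply: hA; rewrite addrC. Qed.
End Sig.

Lemma oppM2 (R : finComNzRingType) a b (hchar : (2%:R : R) = 0) (M : 'M[R]_(a, b)) : - M = M.
Proof.
apply/matrixP => i j; rewrite mxE; apply/eqP; rewrite eq_sym -subr_eq0 opprK.
by rewrite -mulr2n -mulr_natr hchar mulr0.
Qed.

Lemma addM2 (R : finComNzRingType) a b (hchar : (2%:R : R) = 0) (M : 'M[R]_(a, b)) : M + M = 0.
Proof. by rewrite -{1}(oppM2 hchar M) addNr. Qed.

Theorem mainTheorem7 (R : finComNzRingType) (m : nat)
  (hFrob : frobenius_ring R) (hchar : (2%:R : R) = 0)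
  (v1 v2 : RG R m) (hv : v1 != v2)
  (A : 'M[R]_m.+1) (hA : reverse_circulant A) :
  self_dual_code (Msigma v1 v2 A) <->
  (sigma (rg_mul (rg_add v1 v2) (rg_star (rg_add v1 v2))) + A *m A = 1%:M /\
   rg_mul v1 (rg_star v2) = rg_mul v2 (rg_star v1)).
Proof.
apply: (iff_trans (sd_iff _)).
rewrite (oppM2 hchar (1%:M : 'M[R]_(m.+1 + m.+1))).
rewrite scalar_mx_block.
rewrite tr_block_mx. rewrite mulmx_block.
have trT : (sigma v2 + A)^T = (sigma v2)^T + A by rewrite linearD /= (rc_sym hA).
rewrite trT.
set S1 := sigma v1; set S2 := sigma v2.
have TT : (S2 + A) *m (S2^T + A) = S2 *m S2^T + A *m A.
  rewrite mulmxDl !mulmxDr -(sigma_rc v2 hA) -/S2.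
  by rewrite addrA -(addrA (S2 *m S2^T)) (addM2 hchar) addr0.
have Q : S1 *m (S2^T + A) + (S2 + A) *m S1^T = S1 *m S2^T + S2 *m S1^T.
  rewrite mulmxDr mulmxDl -(sigma_rc v1 hA) -/S1 addrACA (addM2 hchar) addr0.
  by [].
have Q' : (S2 + A) *m S1^T + S1 *m (S2^T + A) = S1 *m S2^T + S2 *m S1^T.
  by rewrite addrC.
have TT' : (S2 + A) *m (S2^T + A) + S1 *m S1^T = S1 *m S1^T + (S2 + A) *m (S2^T + A).
  by rewrite addrC.
rewrite TT' Q Q' TT.
have GG : sigma (rg_mul (rg_add v1 v2) (rg_star (rg_add v1 v2))) =
   S1 *m S1^T + S2 *m S2^T + (S1 *m S2^T + S2 *m S1^T).
  rewrite sigma_mul sigma_star sigma_add -/S1 -/S2 linearD /= mulmxDl !mulmxDr.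
  by rewrite [S2 *m S1^T + _]addrC addrACA.
have veq : rg_mul v1 (rg_star v2) = rg_mul v2 (rg_star v1) <->
    S1 *m S2^T + S2 *m S1^T = 0.
  split.
    by move=> h; rewrite -!sigma_star -!sigma_mul h (addM2 hchar).
  move=> h; apply: sigma_inj; rewrite !sigma_mul !sigma_star -/S1 -/S2.
  by apply/eqP; rewrite -subr_eq0 (oppM2 hchar) h.
rewrite GG (addrA (S1 *m S1^T)); split.
  move/eq_block_mx => [h1 h2 _ _]; split; last exact: veq.2.
  by rewrite h2 addr0.
case=> h hv'; have h2 := veq.1 hv'; rewrite h2 addr0 in h.
by rewrite h h2.
Qed.
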